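(* Let $\mathcal{X},\mathcal{Y}$ be disjoint finite sets of Boolean variables, $alive\notin\mathcal{X}\cup\mathcal{Y}$ a fresh variable, $\alpha$ a Boolean formula over $\mathcal{X}$, $\phi$ an LTLf formula over $\mathcal{X}\cup\mathcal{Y}$, and $\psi=t(\phi)\wedge alive\wedge(alive\ U\ (G\neg alive))$. Then $\phi$ is $\alpha$-fair realizable if and only if the LTL formula $GF\alpha\rightarrow\psi$ is realizable with respect to $\langle\mathcal{X},\mathcal{Y}\cup\{alive\}\rangle$.
   Context: LTLf formulas: $\phi ::= a \mid \neg\phi \mid \phi_1\wedge\phi_2 \mid X\phi \mid \phi_1 U\phi_2$ with the finite-trace semantics: $\rho,i\models X\phi$ iff $i+1<|\rho|$ and $\rho,i+1\models\phi$; $\rho,i\models\phi_1U\phi_2$ iff there is $j$ with $i\le j<|\rho|$, $\rho,j\models\phi_2$ and $\rho,k\models\phi_1$ for $i\le k<j$; atoms and Boolean connectives as usual; $\rho\models\phi$ iff $\rho,0\models\phi$. LTL: same syntax plus $F,G$, standard semantics over infinite traces. Translation $t$: $t(a)=a$; $t(\neg\phi_1)=\neg t(\phi_1)$; $t(\phi_1\wedge\phi_2)=t(\phi_1)\wedge t(\phi_2)$; $t(X\phi)=X(alive\wedge t(\phi))$; $t(\phi_1U\phi_2)=t(\phi_1)\,U\,(alive\wedge t(\phi_2))$. $\alpha$-fair realizability: $\phi$ is $\alpha$-fair realizable if there is $g:(2^{\mathcal{X}})^+\to 2^{\mathcal{Y}}$ such that for every $\lambda=X_0,X_1,\ldots\in(2^{\mathcal{X}})^\omega$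 with $X_j\models\alpha$ for infinitely many $j$, there is $k\ge0$ with $\phi$ true in $(X_0\cup g(X_0)),\ldots,(X_k\cup g(X_0,\ldots,X_k))$. LTL realizability: an LTL formula $\Psi$ over $\mathcal{X}\cup\mathcal{Y}'$ ($\mathcal{X},\mathcal{Y}'$ disjoint) is realizable with respect to $\langle\mathcal{X},\mathcal{Y}'\rangle$ if there is $f:(2^{\mathcal{X}})^+\to 2^{\mathcal{Y}'}$ such that for every $\lambda=X_0,X_1,\ldots\in(2^{\mathcal{X}})^\omega$, $\Psi$ holds on the infinite trace $(X_0\cup f(X_0)),(X_1\cup f(X_0,X_1)),(X_2\cup f(X_0,X_1,X_2)),\ldots$. *)

(* Defs.v *)
From mathcomp Require Import all_boot.
Set Implicit Arguments. Unset Strict Implicit. Unset Printing Implicit Defensive.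

Inductive bform (A : Type) : Type :=
| BAtom of A
| BNeg of bform A
| BAnd of bform A & bform A.

Fixpoint beval (A : Type) (f : bform A) (v : A -> bool) : bool :=
  match f with
  | BAtom a => v a
  | BNeg f1 => ~~ beval f1 v
  | BAnd f1 f2 => beval f1 v && beval f2 v
  end.

Inductive ltlf (A : Type) : Type :=
| FAtom of A
| FNeg of ltlf A
| FAnd of ltlf A & ltlf A
| FNext of ltlf A
| FUntil of ltlf A & ltlf A.

Fixpoint ltlf_sat (A : Type) (rho : seq (A -> bool)) (i : nat) (f : ltlf A) : Prop :=
  match f with
  | FAtom a => nth (fun _ => false) rho i a = true
  | FNeg f1 => ~ ltlf_sat rho i f1
  | FAnd f1 f2 => ltlf_sat rho i f1 /\ ltlf_sat rho i f2
  | FNext f1 => i.+1 < size rho /\ ltlf_sat rho i.+1 f1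
  | FUntil f1 f2 => exists j, i <= j /\ j < size rho /\ ltlf_sat rho j f2 /\
                      forall k, i <= k -> k < j -> ltlf_sat rho k f1
  end.

Definition ltlf_models (A : Type) (rho : seq (A -> bool)) (f : ltlf A) : Prop :=
  ltlf_sat rho 0 f.

Inductive ltl (A : Type) : Type :=
| LAtom of A
| LNeg of ltl A
| LAnd of ltl A & ltl A
| LNext of ltl A
| LUntil of ltl A & ltl A
| LF of ltl A
| LG of ltl A.

Fixpoint ltl_sat (A : Type) (w : nat -> A -> bool) (i : nat) (f : ltl A) : Prop :=
  match f with
  | LAtom a => w i a = true
  | LNeg f1 => ~ ltl_sat w i f1
  | LAnd f1 f2 => ltl_sat w i f1 /\ ltl_sat w i f2
  | LNext f1 => ltl_sat w i.+1 f1
  | LUntil f1 f2 => exists j, i <= j /\ ltl_sat w j f2 /\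
                      forall k, i <= k -> k < j -> ltl_sat w k f1
  | LF f1 => exists j, i <= j /\ ltl_sat w j f1
  | LG f1 => forall j, i <= j -> ltl_sat w j f1
  end.

Definition ltl_models (A : Type) (w : nat -> A -> bool) (f : ltl A) : Prop :=
  ltl_sat w 0 f.

Definition LImp (A : Type) (f g : ltl A) : ltl A := LNeg (LAnd f (LNeg g)).

Fixpoint bform_to_ltl (A B : Type) (e : A -> B) (f : bform A) : ltl B :=
  match f with
  | BAtom a => LAtom (e a)
  | BNeg f1 => LNeg (bform_to_ltl e f1)
  | BAnd f1 f2 => LAnd (bform_to_ltl e f1) (bform_to_ltl e f2)
  end.

(* Atoms of the LTL side: X + (Y ∪ {alive}), with alive := inr None,
   which is fresh (distinct from all embedded X and Y atoms). *)
Definition atomXY (X Y : Type) : Type := (X + Y)%type.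
Definition atomXYa (X Y : Type) : Type := (X + option Y)%type.

Definition alive (X Y : Type) : atomXYa X Y := inr None.

Definition embed_atom (X Y : Type) (v : atomXY X Y) : atomXYa X Y :=
  match v with inl x => inl x | inr y => inr (Some y) end.

Fixpoint tr (X Y : Type) (f : ltlf (atomXY X Y)) : ltl (atomXYa X Y) :=
  match f with
  | FAtom a => LAtom (embed_atom a)
  | FNeg f1 => LNeg (tr f1)
  | FAnd f1 f2 => LAnd (tr f1) (tr f2)
  | FNext f1 => LNext (LAnd (LAtom (alive X Y)) (tr f1))
  | FUntil f1 f2 => LUntil (tr f1) (LAnd (LAtom (alive X Y)) (tr f2))
  end.

Definition psi (X Y : Type) (phi : ltlf (atomXY X Y)) : ltl (atomXYa X Y) :=
  LAnd (tr phi)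
       (LAnd (LAtom (alive X Y))
             (LUntil (LAtom (alive X Y)) (LG (LNeg (LAtom (alive X Y)))))).

Definition fair_formula (X Y : Type) (alpha : bform X) (phi : ltlf (atomXY X Y))
  : ltl (atomXYa X Y) :=
  LImp (LG (LF (bform_to_ltl (fun x : X => (inl x : atomXYa X Y)) alpha))) (psi phi).

(* Prefix X_0,...,X_j of an input sequence (always nonempty). Strategies are
   functions on seq (X -> bool); only their values on nonempty sequences matter. *)
Definition prefix (X : Type) (lam : nat -> X -> bool) (j : nat) : seq (X -> bool) :=
  [seq lam i | i <- iota 0 j.+1].

Definition joinXY (X Y : Type) (xi : X -> bool) (yo : Y -> bool) : atomXY X Y -> bool :=
  fun v => match v with inl x => xi x | inr y => yo y end.

Definition joinXYa (X Y : Type) (xi : X -> bool) (yo : option Y -> bool)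
  : atomXYa X Y -> bool :=
  fun v => match v with inl x => xi x | inr y => yo y end.

Definition fair_realizable (X Y : Type) (alpha : bform X) (phi : ltlf (atomXY X Y)) : Prop :=
  exists g : seq (X -> bool) -> (Y -> bool),
    forall lam : nat -> X -> bool,
      (forall n, exists j, n <= j /\ beval alpha (lam j)) ->
      exists k, ltlf_models
        [seq joinXY (lam j) (g (prefix lam j)) | j <- iota 0 k.+1] phi.

Definition ltl_realizable (X Y : Type) (Psi : ltl (atomXYa X Y)) : Prop :=
  exists f : seq (X -> bool) -> (option Y -> bool),
    forall lam : nat -> X -> bool,
      ltl_models (fun j => joinXYa (lam j) (f (prefix lam j))) Psi.

(* Main.v *)
Require Import Defs.
From mathcomp Require Import all_boot.
From mathcomp Require Import zify.
From Stdlib Require Import Classical ClassicalEpsilon.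
Set Implicit Arguments. Unset Strict Implicit.

Section Aux.
Variables X Y : Type.

Lemma core (w : nat -> atomXYa X Y -> bool) (rho : seq (atomXY X Y -> bool)) K
  (Hs : size rho = K.+1)
  (Ha : forall j, w j (alive X Y) = true <-> j <= K)
  (He : forall i a, i <= K -> w i (embed_atom a) = nth (fun _ => false) rho i a) :
  forall phi i, i <= K -> (ltl_sat w i (tr phi) <-> ltlf_sat rho i phi).
Proof.
elim=> [a|f IH|f1 IH1 f2 IH2|f IH|f1 IH1 f2 IH2] i Hi /=.
- by rewrite He.
- by rewrite IH.
- by rewrite IH1 // IH2.
- rewrite Ha Hs; split.
  + move=> [H1 H2]; split; first by lia.
    by rewrite -IH.
  + move=> [H1 H2]; have H3 : i.+1 <= K by lia.
    by split; last rewrite IH.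
- rewrite Hs; split.
  + move=> [j [Hij [[Haj H2] H1]]].
    move/Ha: Haj => HjK.
    exists j; split => //; split; first by lia.
    split; first by rewrite -IH2.
    move=> k Hik Hkj; rewrite -IH1; [by apply: H1 | lia].
  + move=> [j [Hij [HjK [H2 H1]]]].
    have HjK' : j <= K by lia.
    exists j; split => //; split; first by split; [apply/Ha | rewrite IH2].
    move=> k Hik Hkj; rewrite IH1; [by apply: H1 | lia].
Qed.

Lemma bform_lem (w : nat -> atomXYa X Y -> bool) (lam : nat -> X -> bool) j
  (H : forall x, w j (inl x) = lam j x) (a : bform X) :
  ltl_sat w j (bform_to_ltl (fun x : X => (inl x : atomXYa X Y)) a) <-> beval a (lam j).
Proof.
elim: a => [x|a IH|a1 IH1 a2 IH2] /=.
- by rewrite H.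
- rewrite IH; split; [by move/negP|by move/negP].
- rewrite IH1 IH2; split; [by move=> [-> ->]|by move/andP].
Qed.

Lemma size_prefix (lam : nat -> X -> bool) j : size (Defs.prefix lam j) = j.+1.
Proof. by rewrite size_map size_iota. Qed.

Lemma nth_prefix (lam : nat -> X -> bool) j i d : i <= j -> nth d (Defs.prefix lam j) i = lam i.
Proof. move=> H; rewrite (nth_map 0) ?size_iota // nth_iota //. Qed.

Lemma take_prefix (lam : nat -> X -> bool) j i : i <= j -> take i.+1 (Defs.prefix lam j) = Defs.prefix lam i.
Proof.
move=> H; rewrite /Defs.prefix -map_take take_iota.
by have -> : minn i.+1 j.+1 = i.+1 by lia.
Qed.

Definition T (lam : nat -> X -> bool) (g : seq (X -> bool) -> Y -> bool) k :=
  [seq joinXY (lam j) (g (Defs.prefix lam j)) | j <- iota 0 k.+1].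

Definition Ts (g : seq (X -> bool) -> Y -> bool) (s : seq (X -> bool)) k :=
  [seq joinXY (nth (fun _ => false) s i) (g (take i.+1 s)) | i <- iota 0 k.+1].

Lemma Ts_prefix g lam j k : k <= j -> Ts g (Defs.prefix lam j) k = T lam g k.
Proof.
move=> H; apply/eq_in_map => i; rewrite mem_iota => /andP [_ Hi].
rewrite nth_prefix ?take_prefix //; lia.
Qed.

Lemma nth_T lam g k i : i <= k ->
  nth (fun _ => false) (T lam g k) i = joinXY (lam i) (g (Defs.prefix lam i)).
Proof. move=> H; rewrite (nth_map 0) ?size_iota ?nth_iota //; lia. Qed.

Lemma size_T lam g k : size (T lam g k) = k.+1.
Proof. by rewrite size_map size_iota. Qed.

Lemma ex_min (P : nat -> Prop) : (exists n, P n) -> exists n, P n /\ forall m, m < n -> ~ P m.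
Proof.
move=> [n Hn].
suff H: forall N n, n <= N -> P n -> exists n, P n /\ forall m, m < n -> ~ P m.
  exact: (H n n (leqnn n) Hn).
elim=> [|N IH] m Hm Pm.
- exists m; split => // k Hk; lia.
- case: (classic (exists k, k < m /\ P k)) => [[k [Hk Pk]]|Hno].
  + apply: (IH k) => //; lia.
  + exists m; split => // k Hk Pk; apply: Hno; eauto.
Qed.

End Aux.

Theorem mainTheorem8 (X Y : finType) (alpha : bform X) (phi : ltlf (atomXY X Y)) :
  fair_realizable alpha phi <-> ltl_realizable (fair_formula alpha phi).
Proof.
split.
- move=> [g Hg].
  pose f (s : seq (X -> bool)) (o : option Y) : bool :=
    match o with
    | Some y => g s y
    | None => if excluded_middle_informative
                   (forall k, k < (size s).-1 -> ~ ltlf_models (Ts g s k) phi)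
              then true else false
    end.
  exists f => lam.
  set w := fun j => joinXYa (lam j) (f (Defs.prefix lam j)).
  rewrite /ltl_models /fair_formula /LImp /=.
  move=> [HGF Hnpsi]; apply: Hnpsi.
  have Hfair : forall n, exists j, n <= j /\ beval alpha (lam j).
    move=> n; have [j [Hj Hs]] := HGF n (leq0n n).
    by exists j; split => //; rewrite -(bform_lem (w := w)).
  have [k0 [Hk0 Hmin]] := ex_min (Hg lam Hfair).
  have Ha : forall j, w j (alive X Y) = true <-> j <= k0.
    move=> j; rewrite /w /= size_map size_iota /=.
    case: excluded_middle_informative => [H|H]; split => // Hj.
    + case: (leqP j k0) => // Hlt.
      by have := H k0 Hlt; rewrite Ts_prefix //; lia.
    + exfalso; apply: H => k Hk; rewrite Ts_prefix; last by lia.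
      apply: Hmin; lia.
  have He : forall i a, i <= k0 -> w i (embed_atom a) = nth (fun _ => false) (T lam g k0) i a.
    by move=> i [x|y] Hi; rewrite nth_T.
  have Hc := core (size_T lam g k0) Ha He.
  split; first by rewrite Hc.
  split; first exact: (proj2 (Ha 0) (leq0n _)).
  exists k0.+1; split => //; split.
  + move=> j Hj H; have := proj1 (Ha j) H; lia.
  + move=> k _ Hk; apply: (proj2 (Ha k)); lia.
- move=> [f Hf].
  pose g (s : seq (X -> bool)) (y : Y) := f s (Some y).
  exists g => lam Hfair.
  set w := fun j => joinXYa (lam j) (f (Defs.prefix lam j)).
  have Hpsi : ltl_sat w 0 (psi phi).
    apply: NNPP => Hn; apply: (Hf lam); split => // n _.
    have [j [Hj Hs]] := Hfair n.
    by exists j; split => //; apply: (proj2 (bform_lem (w:=w) (lam:=lam) (j:=j) (fun x => erefl) alpha)).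
  move: Hpsi => /= [Htr [Ha0 [j [_ [HG Hbef]]]]].
  have Hj0 : j <> 0 by move=> E; subst j; exact: (HG 0 (leqnn 0)).
  have Ha : forall i, w i (alive X Y) = true <-> i <= j.-1.
    move=> i; split => H.
    + case: (leqP i j.-1) => // Hlt; exfalso; apply: (HG i) => //; lia.
    + apply: Hbef; lia.
  have He : forall i a, i <= j.-1 -> w i (embed_atom a) = nth (fun _ => false) (T lam g j.-1) i a.
    by move=> i [x|y] Hi; rewrite nth_T.
  exists j.-1; exact: (proj1 (core (size_T lam g j.-1) Ha He phi (leq0n _)) Htr).
Qed.
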